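(* Let $m,n\in\mathbf{N}$ with $m\ge n$, and let $\mathcal{P}$ be a closed set family of shape $(m^n)$. Then every $X\in\mathcal{P}$ satisfies $X\supseteq\{1,2,\dots,m-n+1\}$.
   Context: Majorization: for $m$-subsets $X=\{x_1<\dots<x_m\}$, $Y=\{y_1<\dots<y_m\}$ of $\mathbf{N}=\{1,2,\dots\}$, $X\preceq Y$ if $x_i\le y_i$ for all $i$. A set family of shape $(m^n)$ is a collection of $n$ distinct $m$-subsets of $\mathbf{N}$; it is closed if whenever $Y$ belongs to it and $X\preceq Y$, then $X$ belongs to it. *)

(* Defs.v *)
From mathcomp Require Import all_boot all_order.
From mathcomp Require Import finmap.
Set Implicit Arguments. Unset Strict Implicit. Unset Printing Implicit Defensive.
Local Open Scope fset_scope.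

Definition subsetN (X : {fset nat}) : bool := [forall x : X, 0 < val x].

Definition msubset (m : nat) (X : {fset nat}) : bool := subsetN X && (#|` X| == m).

Definition incr_seq (X : {fset nat}) : seq nat := sort leq X.

Definition majorized (X Y : {fset nat}) : bool :=
  (#|` X| == #|` Y|) &&
  all (fun i => nth 0 (incr_seq X) i <= nth 0 (incr_seq Y) i) (iota 0 #|` X|).

Definition family_shape (m n : nat) (P : {fset {fset nat}}) : Prop :=
  #|` P| = n /\ forall X, X \in P -> msubset m X.

Definition closed_family (m : nat) (P : {fset {fset nat}}) : Prop :=
  forall X Y, Y \in P -> msubset m X -> majorized X Y -> X \in P.

(* Main.v *)
Require Import Defs.
From mathcomp Require Import all_boot all_order.
From mathcomp Require Import finmap zify.
Set Implicit Arguments. Unset Strict Implicit.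
Local Open Scope fset_scope.

Lemma incr_sorted (X : {fset nat}) : sorted ltn (incr_seq X).
Proof.
rewrite ltn_sorted_uniq_leq sort_uniq fset_uniq /=.
exact: (sort_sorted leq_total).
Qed.

Lemma incr_size (X : {fset nat}) : size (incr_seq X) = #|` X|.
Proof. by rewrite size_sort. Qed.

Lemma incr_mem (X : {fset nat}) : incr_seq X =i X.
Proof. by move=> x; rewrite mem_sort. Qed.

Lemma nth_incr s i : sorted ltn s -> i.+1 < size s -> nth 0 s i < nth 0 s i.+1.
Proof.
move=> so lt; apply: (sorted_ltn_nth ltn_trans) => //; rewrite inE //.
exact: ltnW.
Qed.

Lemma bnd1 s : sorted ltn s -> all (fun x => 0 < x) s ->
  forall i, i < size s -> i.+1 <= nth 0 s i.
Proof.
move=> so pos; elim=> [|i IH] lt.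
  by case: s so pos lt => //= x s _ /andP[].
have := nth_incr so lt; have := IH (ltnW lt); lia.
Qed.

Lemma bnd2 s k : sorted ltn s -> all (fun x => 0 < x) s -> k \notin s -> 0 < k ->
  forall i, i < size s -> k.-1 <= i -> i.+2 <= nth 0 s i.
Proof.
move=> so pos nk k0; elim=> [|i IH] lt le.
  have k1 : k = 1 by lia.
  have := bnd1 so pos lt; have : nth 0 s 0 != k.
    by apply/eqP=> e; move: nk; rewrite -e mem_nth.
  rewrite k1; lia.
case: (ltnP k.-1 i.+1) => h.
  have := nth_incr so lt; have := IH (ltnW lt) (ltnSE h); lia.
have ek : k = i.+2 by lia.
have := bnd1 so pos lt; have : nth 0 s i.+1 != k.
  by apply/eqP=> e; move: nk; rewrite -e mem_nth.
rewrite ek; lia.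
Qed.

Definition fz (p i : nat) := if i < p then i.+1 else i.+2.
Definition zs (p m : nat) := mkseq (fz p) m.
Definition Zs (p m : nat) : {fset nat} := [fset x in zs p m].

Lemma zs_sorted p m : sorted ltn (zs p m).
Proof.
rewrite /zs /mkseq; apply: (homo_sorted (e:=ltn)); last exact: iota_ltn_sorted.
move=> i j ij; rewrite /fz; case: (ltnP i p); case: (ltnP j p); lia.
Qed.

Lemma incr_Zs p m : incr_seq (Zs p m) = zs p m.
Proof.
apply: (irr_sorted_eq ltn_trans ltnn); [exact: incr_sorted|exact: zs_sorted|].
by move=> x; rewrite incr_mem inE.
Qed.

Lemma card_Zs p m : #|` Zs p m| = m.
Proof. by rewrite -incr_size incr_Zs size_mkseq. Qed.

Lemma msub_Zs p m : msubset m (Zs p m).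
Proof.
rewrite /msubset card_Zs eqxx andbT; apply/forallP => x.
have := fsvalP x; rewrite inE => /mapP [i _ e].
rewrite -[val x]/(fsval x) e /fz; by case: (i < p).
Qed.

Lemma nth_zs p m i : i < m -> nth 0 (zs p m) i = fz p i.
Proof. by move=> h; rewrite nth_mkseq. Qed.

Lemma Zs_inj p q m : p <= m -> q <= m -> Zs p m = Zs q m -> p = q.
Proof.
move=> pm qm e; have e2 : zs p m = zs q m by rewrite -!incr_Zs e.
wlog lt : p q pm qm e e2 / p < q.
  move=> W; case: (ltngtP p q) => h //; first exact: W.
  by apply/esym/W.
have := congr1 (fun s => nth 0 s p) e2; rewrite !nth_zs; try lia.
rewrite /fz ltnn lt.
lia.
Qed.

Theorem lemma5p4 (m n : nat) (P : {fset {fset nat}}) :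
  n <= m -> family_shape m n P -> closed_family m P ->
  forall X, X \in P -> forall k, 1 <= k <= m - n + 1 -> k \in X.
Proof.
move=> nm [cP mP] clP X XP k /andP[k1 km].
case: n nm cP km => [|n] nm cP km.
  move/size0nil: cP => e.
  by move: XP; rewrite -[X \in P]/(X \in enum_fset P) e.
apply/negPn/negP => kX.
have /andP[sX /eqP cX] := mP X XP.
set s := incr_seq X.
have so : sorted ltn s by exact: incr_sorted.
have ss : size s = m by rewrite incr_size.
have pos : all (fun x => 0 < x) s.
  apply/allP => x; rewrite incr_mem => xX.
  by move/forallP: sX => /(_ [` xX]).
have nks : k \notin s by rewrite incr_mem.
set L := map (fun p => Zs p m) (iota k.-1 (m + 2 - k)).
have uL : uniq L.
  rewrite map_inj_in_uniq ?iota_uniq // => p q; rewrite !mem_iota => hp hq.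
  apply: Zs_inj; lia.
have sub : {subset L <= enum_fset P}.
  move=> Z /mapP [p]; rewrite mem_iota => hp ->.
  apply: (clP _ X XP (msub_Zs p m)).
  rewrite /majorized card_Zs cX eqxx /=; apply/allP => i; rewrite mem_iota => hi.
  rewrite incr_Zs nth_zs; last lia.
  rewrite /fz; case: ltnP => hip.
    apply: bnd1 => //; rewrite -/s ss; lia.
  apply: (bnd2 so pos nks) => //; rewrite -/s ?ss; lia.
have := uniq_leq_size uL sub; rewrite size_map size_iota cP; lia.
Qed.
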